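(* Assume the rank-1 setting described in the context and that Assumption 3 holds. Then for all sufficiently large $n$, for every $C\subseteq V$ with $|C|=r$, every maximizer $D^\star_C$ of $\frac{\mathbb{E}_0[e(D)]}{|D|\log(n/|D|)}$ over nonempty $D\subseteq C$ satisfies $|D^\star_C|\ge r^{1/3}$.
   Context: Rank-1 setting. For each $n$ let $V=\{1,\dots,n\}$ with vertex weights $\theta_i\in(0,1)$ and edge probabilities $p_{ij}=\theta_i\theta_j$ ($i\ne j$). Under $\mathbb{P}_0$ the adjacency entries $A_{ij}$ ($i<j$) of a random simple graph on $V$ are independent $\mathrm{Bern}(p_{ij})$, so that $\mathbb{E}_0[e(D)]=\sum_{i<j,\ i,j\in D}\theta_i\theta_j$, where $e(D)$ is the number of edges inside $D$. $r=r_n$ is a community size. All quantities may depend on $n$, and asymptotics are as $n\to\infty$. Assumption 3. With $\theta_{\max}=\max_i\theta_i$ and $\theta_{\min}=\min_i\theta_i$: $(\theta_{\max}/\theta_{\min})^2=o\big(r^{2/3}\wedge\frac nr\theta_{\min}^2\big)$. *)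

(* Defs.v *)
From HB Require Import structures.
From mathcomp Require Import all_boot all_order all_algebra.
From mathcomp Require Import all_classical all_reals all_analysis.
Set Implicit Arguments. Unset Strict Implicit. Unset Printing Implicit Defensive.
Import Order.TTheory GRing.Theory Num.Theory.
Local Open Scope ring_scope.

Section Rank1.
Variable R : realType.

(* theta_max and theta_min over V = 'I_n (weights lie in (0,1), so the
   neutral elements 0 / 1 are harmless for n >= 1). *)
Definition theta_max (n : nat) (th : 'I_n -> R) : R :=
  \big[Num.max/0]_(i < n) th i.
Definition theta_min (n : nat) (th : 'I_n -> R) : R :=
  \big[Num.min/1]_(i < n) th i.

Definition exp_edges (n : nat) (th : 'I_n -> R) (D : {set 'I_n}) : R :=
  \sum_(i in D) \sum_(j in D | (i < j)%N) th i * th j.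

Definition objective (n : nat) (th : 'I_n -> R) (D : {set 'I_n}) : R :=
  exp_edges th D / (#|D|%:R * ln (n%:R / #|D|%:R)).

Definition is_maximizer (n : nat) (th : 'I_n -> R) (C D : {set 'I_n}) : Prop :=
  [/\ D \subset C, D != finset.set0 &
      forall D' : {set 'I_n}, D' \subset C -> D' != finset.set0 ->
        objective th D' <= objective th D].

Definition little_o (a b : nat -> R) : Prop :=
  forall eps : R, 0 < eps -> exists N : nat, forall n : nat, (N <= n)%N ->
    `|a n| <= eps * `|b n|.

Definition assumption3 (theta : forall n : nat, 'I_n -> R) (r : nat -> nat) : Prop :=
  little_o (fun n => (theta_max (theta n) / theta_min (theta n)) ^+ 2)
           (fun n => Num.min ((r n)%:R `^ (2 / 3))
                             ((n%:R / (r n)%:R) * theta_min (theta n) ^+ 2)).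
End Rank1.

(* Main.v *)
Require Import Defs.
Set Warnings "-all".
From mathcomp Require Import all_boot all_order all_algebra all_classical all_reals all_analysis.
From mathcomp Require Import lra ring.
Import Order.TTheory GRing.Theory Num.Theory.
Local Open Scope ring_scope.

Lemma pairs2 (R : realType) (n : nat) (F : 'I_n -> 'I_n -> R) (D : {set 'I_n})
  (symF : forall i j, F i j = F j i) :
  2 * \sum_(i in D) \sum_(j in D | (i < j)%N) F i j =
  \sum_(i in D) \sum_(j in D) F i j - \sum_(i in D) F i i.
Proof.
have E1 : forall i, i \in D -> \sum_(j in D) F i j =
   \sum_(j in D | (i < j)%N) F i j + \sum_(j in D | (j < i)%N) F i j + F i i.
  move=> i iD.
  rewrite [LHS](bigID (fun j : 'I_n => (i < j)%N)) /= -addrA; congr (_ + _).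
  rewrite [LHS](bigID (fun j : 'I_n => (j < i)%N)) /=; congr (_ + _).
    by apply: eq_bigl => j; case: (j \in D) => //=; case: ltngtP.
  rewrite (big_pred1 i) // => j /=; rewrite /pred1 /=.
  case: eqVneq => [->|ne]; first by rewrite iD ltnn.
  case: (j \in D) => //=.
  by case: ltngtP => // /val_inj h; rewrite h eqxx in ne.
rewrite (eq_bigr _ E1) !big_split /=.
have -> : \sum_(i in D) \sum_(j in D | (j < i)%N) F i j =
          \sum_(i in D) \sum_(j in D | (i < j)%N) F i j.
  rewrite (exchange_big_dep (mem D)) /=; last by move=> i j _ /andP[].
  apply: eq_bigr => j jD; apply: eq_big => [i|i _]; last by rewrite symF.
  by rewrite jD.
lra.
Qed.

Lemma sum2c (R : realType) n (D : {set 'I_n}) (c : R) :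
  \sum_(i in D) \sum_(j in D) c = #|D|%:R * #|D|%:R * c.
Proof. rewrite sumr_const sumr_const; ring. Qed.

Lemma sum1c (R : realType) n (D : {set 'I_n}) (c : R) :
  \sum_(i in D) c = #|D|%:R * c.
Proof. rewrite sumr_const; ring. Qed.

Lemma auxA (R : realFieldType) (a : R) : 0 <= a -> 4 <= a * a -> 2 <= a.
Proof. move=> *; nra. Qed.

Lemma auxB (R : realFieldType) (t : R) : 0 < t < 1 -> t * t < 1.
Proof. move=> /andP[? ?]; nra. Qed.

Lemma auxC (R : realFieldType) (x y t : R) :
  0 < x -> 0 <= y -> t < 1 -> 0 < t -> 4 <= y * t -> 4 * x < y * x.
Proof. move=> *; nra. Qed.

Lemma auxD (R : realFieldType) (d u v : R) : 1 <= d -> 0 <= u -> u <= v -> 0 <= d * v - u.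
Proof. move=> *; nra. Qed.

Theorem lemma1 (R : realType) (theta : forall n : nat, 'I_n -> R) (r : nat -> nat)
  (htheta : forall (n : nat) (i : 'I_n), 0 < theta n i < 1)
  (hA3 : assumption3 theta r) :
  exists N : nat, forall n : nat, (N <= n)%N ->
    forall C : {set 'I_n}, #|C| = r n ->
    forall D : {set 'I_n}, is_maximizer (theta n) C D ->
      (r n)%:R `^ (1 / 3) <= (#|D|%:R : R).
Proof.
have [N0 HN] := hA3 (1/4) ltac:(lra).
exists (maxn N0 1) => n Hn C HC D [DC Dn0 Dmax].
have n1 : (0 < n)%N by apply: leq_trans Hn; rewrite leq_maxr.
have := HN n (leq_trans (leq_maxl _ _) Hn) => /=.
set th := theta n.
set tM := theta_max th; set tm := theta_min th.
set x : R := (r n)%:R.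
set K := (tM / tm) ^+ 2.
have hle : forall i, tm <= th i <= tM.
  move=> i; apply/andP; split.
    exact: bigmin_le.
  exact: (le_bigmax _ (fun i => th i)).
have tm0 : 0 < tm.
  rewrite /tm /theta_min; apply: lt_bigmin; first exact: ltr01.
  by move=> i _; case/andP: (htheta n i).
have tm1 : tm < 1.
  have /andP[h1 _] := hle (Ordinal n1).
  case/andP: (htheta n (Ordinal n1)) => _ h2; exact: le_lt_trans h1 h2.
have tmM : tm <= tM by case/andP: (hle (Ordinal n1)) => h1 h2; exact: le_trans h1 h2.
have KtM : K * tm ^+ 2 = tM ^+ 2.
  rewrite /K expr_div_n divfK // expf_neq0 //; exact: lt0r_neq0.
have K1 : 1 <= K.
  rewrite /K expr_div_n ler_pdivlMr ?exprn_gt0 // mul1r.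
  rewrite ler_pXn2r ?nnegrE //; lra.
set a := x `^ (1 / 3).
have a0 : 0 <= a by exact: powR_ge0.
have x0 : 0 <= x by exact: ler0n.
have Ea2 : x `^ (2 / 3) = a * a.
  rewrite /a -powRD; first by congr (_ `^ _); lra.
  apply/implyP => h; exfalso; move/eqP: h; lra.
have Ex : x = a * a * a.
  rewrite -Ea2 /a -powRD; first by rewrite (_ : 2/3 + 1/3 = 1) ?powRr1 //; lra.
  apply/implyP => h; exfalso; move/eqP: h; lra.
set B := n%:R / x * tm ^+ 2.
have B0 : 0 <= B.
  rewrite /B; apply: mulr_ge0; first by apply: divr_ge0.
  by apply: exprn_ge0; lra.
rewrite ger0_norm; last by rewrite /K; apply: exprn_ge0; apply: divr_ge0 => //; lra.
rewrite ger0_norm; last by rewrite le_min Ea2 B0 andbT; apply/mulr_ge0.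
move=> HK.
have HKa : K <= 1/4 * (a * a).
  apply: (le_trans HK); rewrite -Ea2; apply: ler_wpM2l; first lra.
  by rewrite ge_min lexx.
have HKB : K <= 1/4 * B.
  apply: (le_trans HK); apply: ler_wpM2l; first lra.
  by rewrite ge_min lexx orbT.
have a2 : 2 <= a by apply: auxA => //; lra.
have xpos : 0 < x by rewrite Ex !mulr_gt0 //; lra.
have nx : 4 * x < n%:R.
  have hy : n%:R / x * x = n%:R by rewrite divfK // lt0r_neq0.
  have : 4 <= n%:R / x * tm ^+ 2 by rewrite -/B; lra.
  have tm2 : tm ^+ 2 < 1 by rewrite expr2; apply: auxB; rewrite tm0.
  have y0 : 0 <= n%:R / x by apply: divr_ge0.
  move=> h4; have := @auxC R _ _ _ xpos y0 tm2 (exprn_gt0 2 tm0) h4.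
  by rewrite hy.
set d : R := #|D|%:R.
have d1 : 1 <= d by rewrite /d (ler_nat R 1) card_gt0.
have dx : d <= x by rewrite /d /x ler_nat -HC subset_leq_card.
rewrite leNgt; apply/negP => da.
have Cn0 : C != finset.set0 by rewrite -card_gt0 HC -(ltr0n R) -/x.
have := Dmax C (subxx C) Cn0; rewrite /objective /exp_edges HC -/x -/d.
set ED := \sum_(i in D) \sum_(j in D | (i < j)%N) th i * th j.
set EC := \sum_(i in C) \sum_(j in C | (i < j)%N) th i * th j.
have hD := @pairs2 R n (fun i j => th i * th j) D (fun i j => mulrC _ _).
have hC := @pairs2 R n (fun i j => th i * th j) C (fun i j => mulrC _ _).
rewrite -/ED /= in hD; rewrite -/EC /= in hC.
have tm2 : 0 < tm ^+ 2 by apply: exprn_gt0.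
have th0 : forall i, 0 <= th i by move=> i; case/andP: (htheta n i) => h _; exact: ltW.
have Hup : forall i j, th i * th j <= tM ^+ 2.
  move=> i j; rewrite expr2; apply: ler_pM => //.
    by case/andP: (hle i).
  by case/andP: (hle j).
have Hlo : forall i j, tm ^+ 2 <= th i * th j.
  move=> i j; rewrite expr2; apply: ler_pM; try exact: ltW.
    by case/andP: (hle i).
  by case/andP: (hle j).
have SSD : \sum_(i in D) \sum_(j in D) th i * th j <= d * d * tM ^+ 2.
  apply: (le_trans (y := \sum_(i in D) \sum_(j in D) tM ^+ 2)).
    by apply: ler_sum => i _; apply: ler_sum => j _; exact: Hup.
  by rewrite sum2c.
have sqD : d * tm ^+ 2 <= \sum_(i in D) th i * th i.
  apply: (le_trans (y := \sum_(i in D) tm ^+ 2)); last first.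
    by apply: ler_sum => i _; exact: Hlo.
  by rewrite sum1c.
have SSC : x * x * tm ^+ 2 <= \sum_(i in C) \sum_(j in C) th i * th j.
  apply: (le_trans (y := \sum_(i in C) \sum_(j in C) tm ^+ 2)); last first.
    by apply: ler_sum => i _; apply: ler_sum => j _; exact: Hlo.
  by rewrite sum2c HC.
have sqC : \sum_(i in C) th i * th i <= x * tM ^+ 2.
  apply: (le_trans (y := \sum_(i in C) tM ^+ 2)).
    by apply: ler_sum => i _; exact: Hup.
  by rewrite sum1c HC.
set Ld := ln (n%:R / d); set Lr := ln (n%:R / x).
have d0 : 0 < d by lra.
have n0 : 0 < n%:R :> R by rewrite ltr0n.
have Lr0 : 0 < Lr by apply: ln_gt0; rewrite ltr_pdivlMr // mul1r; lra.
have LdLr : Lr <= Ld.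
  rewrite /Lr /Ld ler_ln ?posrE ?divr_gt0 //.
  apply: ler_wpM2l; first lra.
  by rewrite lef_pV2 ?posrE.
set P := d * tM ^+ 2 - tm ^+ 2.
set P' := x * tm ^+ 2 - tM ^+ 2.
have Lr2 : 2 * Lr != 0 by apply: lt0r_neq0; lra.
have hQ : P / (2 * Lr) * (2 * Lr) = P by rewrite divfK.
have hQ' : P' / (2 * Lr) * (2 * Lr) = P' by rewrite divfK.
set Q := P / (2 * Lr) in hQ *; set Q' := P' / (2 * Lr) in hQ' *.
have tMm : tm ^+ 2 <= tM ^+ 2 by rewrite -KtM; nra.
have P0 : 0 <= P by exact: (@auxD R d _ _ d1 (ltW (exprn_gt0 2 tm0)) tMm).
have Q0 : 0 <= Q by rewrite /Q; apply: divr_ge0 => //; lra.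
have objD : ED / (d * Ld) <= Q.
  rewrite ler_pdivrMr; last by apply: mulr_gt0 => //; lra.
  have h1 : 0 <= Q * d * (Ld - Lr) by apply: mulr_ge0; [apply: mulr_ge0 => //; exact: ltW | lra].
  have e1 : 2 * (Q * (d * Ld)) = 2 * (Q * d * (Ld - Lr)) + d * (Q * (2 * Lr)) by ring.
  rewrite hQ /P in e1; lra.
have objC : Q' <= EC / (x * Lr).
  rewrite ler_pdivlMr; last by apply: mulr_gt0.
  have e1 : 2 * (Q' * (x * Lr)) = x * (Q' * (2 * Lr)) by ring.
  rewrite hQ' /P' in e1; lra.
have hKd : (d + 1) * K < x + 1.
  have h1 : 0 < (a - d) * K by apply: mulr_gt0; lra.
  have h2 : 0 <= a * (1/4 * (a * a) - K) by apply: mulr_ge0; lra.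
  have h3 : 0 <= (a - 1) * K by apply: mulr_ge0; lra.
  rewrite Ex; lra.
have PP : P < P'.
  rewrite /P /P' -KtM.
  have : (d + 1) * K * tm ^+ 2 < (x + 1) * tm ^+ 2 by rewrite ltr_pM2r.
  lra.
have QQ : Q < Q'.
  rewrite /Q /Q' ltr_pM2r //; rewrite invr_gt0; lra.
lra.
Qed.
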